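(* Let $\Omega$ be either the bidisk $\mathbb{D}^2$ or the unit ball $\mathbb{B}_2$ in $\mathbb{C}^2$, and let $\Phi(z_1,z_2)=(z_1^2+z_2^2,\ z_1^2z_2^2)$. Then $\Phi(\Omega)$ is open and $\Phi$ is a holomorphic proper map from $\Omega$ onto $\Phi(\Omega)$.
   Context: A holomorphic map $\Phi:\Omega\to\Omega'$ between domains is proper if $\Phi^{-1}(K)$ is compact for every compact $K\subseteq\Omega'$. *)

(* Defs.v *)
(* C := R[i] for R : realType (the complex numbers),
   C^2 := C * C with its product (max-norm) normed C-module structure. *)
From HB Require Import structures.
From mathcomp Require Import all_boot all_order all_algebra.
From mathcomp Require Import complex.
From mathcomp Require Import all_classical all_reals all_analysis.
Export numFieldNormedType.Exports.
Unset Printing Implicit Defensive.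
Import Order.TTheory GRing.Theory Num.Theory.
Local Open Scope classical_set_scope.
Local Open Scope ring_scope.

Definition Cplx (R : realType) : numClosedFieldType := R[i].

Definition bidisk (R : realType) : set (Cplx R * Cplx R) :=
  [set z | `|z.1| < 1 /\ `|z.2| < 1].

Definition unit_ball2 (R : realType) : set (Cplx R * Cplx R) :=
  [set z | `|z.1| ^+ 2 + `|z.2| ^+ 2 < 1].

Definition Phi (R : realType) (z : Cplx R * Cplx R) : Cplx R * Cplx R :=
  (z.1 ^+ 2 + z.2 ^+ 2, z.1 ^+ 2 * z.2 ^+ 2).

(* Holomorphic on an open set: complex (C-linear) Frechet differentiable at every point.
   [differentiable] uses linear maps over the scalar field C = Cplx R. *)
Definition holomorphic_on (R : realType) (U : set (Cplx R * Cplx R))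
    (f : Cplx R * Cplx R -> Cplx R * Cplx R) : Prop :=
  forall z, U z -> differentiable f z.

Definition proper_map (R : realType) (U V : set (Cplx R * Cplx R))
    (f : Cplx R * Cplx R -> Cplx R * Cplx R) : Prop :=
  (forall z, U z -> V (f z)) /\
  (forall K, K `<=` V -> compact K -> compact (U `&` f @^-1` K)).

(* Main.v *)
Require Import Defs.
From HB Require Import structures.
From mathcomp Require Import all_boot all_order all_algebra.
From mathcomp Require Import complex.
From mathcomp Require Import all_classical all_reals all_analysis.
From mathcomp Require Import ring lra.
Import numFieldNormedType.Exports.
Import Order.TTheory GRing.Theory Num.Theory.
Local Open Scope classical_set_scope.
Local Open Scope ring_scope.
Lemma prod_small (K : numDomainType) (x y e : K) : 0 < e ->
  `|x| * `|y| < e ^+ 2 -> `|x| < e \/ `|y| < e.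
Proof.
move=> e0 h.
have [hx|hx] := real_ltP (normr_real x) (gtr0_real e0); first by left.
have [hy|hy] := real_ltP (normr_real y) (gtr0_real e0); first by right.
have : e ^+ 2 <= `|x| * `|y|.
  by rewrite expr2; apply: ler_pM => //; apply: ltW.
by move/(lt_le_trans h); rewrite ltxx.
Qed.

Lemma sym_eq (K : idomainType) (a b a0 b0 : K) :
  a + b = a0 + b0 -> a * b = a0 * b0 -> (a = a0 /\ b = b0) \/ (a = b0 /\ b = a0).
Proof.
move=> hs hp.
have : (a0 - a) * (a0 - b) = 0.
  have -> : (a0 - a) * (a0 - b) = a0 ^+ 2 - a0 * (a + b) + a * b by ring.
  rewrite hs hp; ring.
move/eqP; rewrite mulf_eq0 !subr_eq0 => /orP[/eqP h|/eqP h].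
  subst a0; left; split => //; exact: (addrI a).
subst a0; right; split => //.
by apply: (addIr b); rewrite hs addrC.
Qed.

Lemma near_root (K : numClosedFieldType) (x w e : K) : 0 < e ->
  `|x - w ^+ 2| < e ^+ 2 -> exists y, y ^+ 2 = x /\ `|y - w| < e.
Proof.
move=> e0 h.
set c := sqrtC x.
have hc : c ^+ 2 = x by rewrite sqrtCK.
have : `|c - w| * `|- c - w| < e ^+ 2.
  rewrite -normrM.
  have -> : (c - w) * (- c - w) = - (c ^+ 2 - w ^+ 2) by ring.
  by rewrite normrN hc.
case/prod_small => // hh.
  by exists c.
by exists (- c); rewrite sqrrN.
Qed.

Lemma quad_roots (K : numClosedFieldType) (s p : K) :
  exists a b, a + b = s /\ a * b = p.
Proof.
set r := sqrtC (s ^+ 2 - 4 * p).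
have hr : r ^+ 2 = s ^+ 2 - 4 * p by rewrite sqrtCK.
have h2 : (2 : K) != 0 by rewrite pnatr_eq0.
exists ((s + r) / 2), (s - (s + r) / 2); split; first ring.
have -> : (s + r) / 2 * (s - (s + r) / 2) = (s ^+ 2 - r ^+ 2) / 4.
  by field.
rewrite hr.
have h4 : (4 : K) != 0 by rewrite pnatr_eq0.
by field.
Qed.

Lemma near_pair (K : numClosedFieldType) (a0 b0 s p eta d : K) : 0 < eta ->
  d * (`|a0| + 1) <= eta ^+ 2 ->
  `|s - (a0 + b0)| < d -> `|p - a0 * b0| < d ->
  exists a b, a + b = s /\ a * b = p /\ `|a - a0| < eta /\ `|b - b0| < d + eta.
Proof.
move=> eta0 hd hs0 hp0.
have [a [b [hs hp]]] := quad_roots _ s p.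
have gen : forall a b, a + b = s -> a * b = p -> `|a0 - a| < eta ->
    `|b - b0| < d + eta.
  move=> x y hxy _ hx.
  have -> : y - b0 = (s - (a0 + b0)) + (a0 - x) by rewrite -hxy; ring.
  by apply: (le_lt_trans (ler_normD _ _)); apply: ltr_leD => //; apply: ltW.
have key : `|a0 - a| * `|a0 - b| < eta ^+ 2.
  rewrite -normrM.
  have -> : (a0 - a) * (a0 - b) = (a0 + b0 - s) * a0 + (p - a0 * b0).
    by rewrite -hs -hp; ring.
  apply: (le_lt_trans (ler_normD _ _)); rewrite normrM.
  apply: (lt_le_trans _ hd).
  rewrite mulrDr mulr1; apply: ler_ltD => //.
  by apply: ler_wpM2r => //; rewrite distrC; apply: ltW.
case: (prod_small _ _ _ _ eta0 key) => h.
  exists a, b; split; first exact: hs.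
  split; first exact: hp.
  split; first by rewrite distrC.
  exact: (gen a b).
exists b, a; split; first by rewrite addrC.
split; first by rewrite mulrC.
split; first by rewrite distrC.
apply: (gen b a) => //; [exact: (etrans (addrC _ _) hs)|exact: (etrans (mulrC _ _) hp)].
Qed.

Lemma open_at (K : numClosedFieldType) (w1 w2 eps : K) : 0 < eps ->
  exists2 d : K, 0 < d & forall s p : K,
    `|s - (w1 ^+ 2 + w2 ^+ 2)| < d -> `|p - w1 ^+ 2 * w2 ^+ 2| < d ->
    exists y1 y2 : K, y1 ^+ 2 + y2 ^+ 2 = s /\ y1 ^+ 2 * y2 ^+ 2 = p /\
       `|y1 - w1| < eps /\ `|y2 - w2| < eps.
Proof.
move=> e0.
set a0 := w1 ^+ 2; set b0 := w2 ^+ 2.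
set eta := eps ^+ 2 / 2.
have eta0 : 0 < eta by rewrite divr_gt0 // exprn_gt0.
have etale : eta + eta = eps ^+ 2 by rewrite /eta; field.
have etalt : eta < eps ^+ 2 by rewrite -etale ltrDr.
set M := `|a0| + 1 + eta.
have M0 : 0 < M by rewrite /M addr_gt0 // ltr_wpDl.
have etaM : eta <= M by rewrite /M lerDr addr_ge0.
have a0M : `|a0| + 1 <= M by rewrite /M lerDl ltW.
set d := eta ^+ 2 / M.
have d0 : 0 < d by rewrite divr_gt0 // exprn_gt0.
have dM : d * M = eta ^+ 2 by rewrite /d divfK // gt_eqF.
have hd : d * (`|a0| + 1) <= eta ^+ 2.
  by rewrite -dM; apply: ler_wpM2l => //; apply: ltW.
have deta : d <= eta.
  by rewrite -(ler_pM2r M0) dM expr2; apply: ler_wpM2l => //; apply: ltW.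
exists d => // s p hs hp.
have [a [b [hab [hpab [ha hb]]]]] := near_pair _ _ _ _ _ _ _ eta0 hd hs hp.
have [y1 [hy1 hy1w]] := near_root _ _ _ _ e0 (lt_trans ha etalt).
have hb' : `|b - b0| < eps ^+ 2.
  by apply: (lt_le_trans hb); rewrite -etale lerD2r.
have [y2 [hy2 hy2w]] := near_root _ _ _ _ e0 hb'.
exists y1, y2; rewrite hy1 hy2; split; first exact: hab.
split; first exact: hpab.
by split.
Qed.

Lemma Phi_diff (R : realType) z : differentiable (Phi R) z.
Proof.
have d1 : differentiable (@fst (Cplx R) (Cplx R)) z.
  by apply: linear_differentiable => x; apply: cvg_fst.
have d2 : differentiable (@snd (Cplx R) (Cplx R)) z.
  by apply: linear_differentiable => x; apply: cvg_snd.
apply: differentiable_pair.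
  have -> : (fun y : Cplx R * Cplx R => y.1 ^+ 2 + y.2 ^+ 2) = (fst ^+ 2 + snd ^+ 2).
    by apply/funext => y.
  by apply: differentiableD; apply: differentiableX.
have -> : (fun y : Cplx R * Cplx R => y.1 ^+ 2 * y.2 ^+ 2) = (fst ^+ 2 * snd ^+ 2).
  by apply/funext => y.
by apply: differentiableM; apply: differentiableX.
Qed.

Section Top.
Local Open Scope complex_scope.

Variable R : realType.
Lemma normRC (x : R) : `|x%:C| = `|x|%:C :> Cplx R.
Proof. by rewrite normc_def /= expr0n /= addr0 sqrtr_sqr. Qed.

Lemma rc_cont : continuous (fun x : R => x%:C : Cplx R).
Proof.
move=> x; apply/cvgrPdist_lt => e e0.
have ee : e = (@complex.Re R e)%:C.
  by rewrite [LHS]complexE (ger0_Im (ltW e0)) mulr0 addr0.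
have Re0 : 0 < @complex.Re R e by rewrite -ltcR -ee.
near=> y.
rewrite -rmorphB normRC ee ltcR.
near: y.
by apply: (@cvgr_dist_lt _ _ _ _ _ id).
Unshelve. all: by end_near.
Qed.

Definition fC (p : R * R) : Cplx R := p.1%:C + 'i * p.2%:C.
Lemma fC_cont : continuous fC.
Proof.
move=> p; apply: cvgD.
  have h1 : {for p, continuous (@fst R R)} by apply: cvg_fst.
  have := continuous_comp h1 (@rc_cont _). exact.
apply: cvgM; first exact: cvg_cst.
have h2 : {for p, continuous (@snd R R)} by apply: cvg_snd.
have := continuous_comp h2 (@rc_cont _). exact.
Qed.
Definition Sq : set (Cplx R) := fC @` (closed_ball (0:R) 1 `*` closed_ball (0:R) 1).
Lemma Sq_compact : compact Sq.
Proof.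
apply: continuous_compact.
  by apply: continuous_subspaceT => x; apply: fC_cont.
by apply: compact_setX; apply: closed_ballR_compact.
Qed.
Lemma disk_Sq (z : Cplx R) : `|z| < 1 -> Sq z.
Proof.
move=> z1; exists (complex.Re z, complex.Im z); last by rewrite /fC /= -complexE.
have hR := normc_ge_Re z.
have hI : `|complex.Im z|%:C <= `|z| :> Cplx R.
  rewrite normc_def lecR -sqrtr_sqr; apply: ler_wsqrtr.
  by rewrite lerDr sqr_ge0.
split; rewrite closed_ballE //= /closed_ball_ /= distrC subr0 -(@lecR R).
  by rewrite (le_trans hR) // ltW.
by rewrite (le_trans hI) // ltW.
Qed.


End Top.

Section Main.
Variable R : realType.
Local Notation C := (Cplx R).

Lemma Om_inv (Omega : set (C * C)) z w :
  Omega = bidisk R \/ Omega = unit_ball2 R ->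
  Phi R z = Phi R w -> Omega w -> Omega z.
Proof.
move=> hOm [hs hp].
have [[e1 e2]|[e1 e2]] := sym_eq _ _ _ _ _ hs hp.
  case: hOm => ->; rewrite /bidisk /unit_ball2 /=.
    move=> [h1 h2]; split.
      by rewrite -(@expr_lt1 _ 2) // -normrX e1 normrX expr_lt1.
    by rewrite -(@expr_lt1 _ 2) // -normrX e2 normrX expr_lt1.
  by rewrite -!normrX e1 e2 !normrX.
case: hOm => ->; rewrite /bidisk /unit_ball2 /=.
  move=> [h1 h2]; split.
    by rewrite -(@expr_lt1 _ 2) // -normrX e1 normrX expr_lt1.
  by rewrite -(@expr_lt1 _ 2) // -normrX e2 normrX expr_lt1.
by rewrite -!normrX e1 e2 !normrX addrC.
Qed.


Lemma Om_Sq (Omega : set (C * C)) :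
  Omega = bidisk R \/ Omega = unit_ball2 R -> Omega `<=` Sq R `*` Sq R.
Proof.
have hb : bidisk R `<=` Sq R `*` Sq R.
  by move=> z [h1 h2]; split; apply: disk_Sq.
case=> ->; first exact: hb.
move=> z hz; apply: hb; split.
  rewrite -(@expr_lt1 _ 2) //; apply: le_lt_trans hz.
  by rewrite lerDl exprn_ge0.
rewrite -(@expr_lt1 _ 2) //; apply: le_lt_trans hz.
by rewrite lerDr exprn_ge0.
Qed.

Lemma ball_prodE (w z : C * C) (e : C) :
  ball w e z <-> `|w.1 - z.1| < e /\ `|w.2 - z.2| < e.
Proof. by []. Qed.

Lemma bidisk_open : open (bidisk R).
Proof.
have -> : bidisk R = ball (0 : C * C) 1.
  apply/funext => z; apply/propext; rewrite ball_prodE /bidisk /= !sub0r !normrN.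
  by [].
exact: ball_open.
Qed.


Lemma ball2_open : open (unit_ball2 R).
Proof.
pose f := fun z : C * C => `|z.1| * `|z.1| + `|z.2| * `|z.2|.
have -> : unit_ball2 R = f @^-1` ball (0 : C) 1.
  apply/funext => z; apply/propext; rewrite /unit_ball2 /ball /= sub0r normrN.
  rewrite (@ger0_norm _ (f z)); last by rewrite /f addr_ge0 // mulr_ge0.
  by rewrite /f -!expr2.
apply: open_comp; last exact: ball_open.
move=> z _; apply: cvgD; apply: cvgM; apply: cvg_norm.
- exact: cvg_fst.
- exact: cvg_fst.
- exact: cvg_snd.
- exact: cvg_snd.
Qed.

End Main.

Theorem proposition6p2 (R : realType) (Omega : set (Cplx R * Cplx R)) :
  Omega = bidisk R \/ Omega = unit_ball2 R ->
  open (Phi R @` Omega) /\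
  holomorphic_on R Omega (Phi R) /\
  proper_map R Omega (Phi R @` Omega) (Phi R).
Proof.
move=> hOm.
have Phic : continuous (Phi R) := fun z => differentiable_continuous (Phi_diff _ z).
have Omopen : open Omega by case: hOm => ->; [exact: bidisk_open R|exact: ball2_open R].
split.
  rewrite openE => _ [w Ow <-].
  have : nbhs w Omega by exact: (Omopen w Ow).
  move/nbhs_ballP => [eps eps0 hball].
  have [d d0 hd] := open_at _ w.1 w.2 eps eps0.
  apply/nbhs_ballP; exists d => //= k /(ball_prodE R) [k1 k2].
  rewrite distrC in k1; rewrite distrC in k2.
  have [y1 [y2 [hs [hp [h1 h2]]]]] := hd k.1 k.2 k1 k2.
  exists (y1, y2).
    by apply: hball; apply/(ball_prodE R); rewrite /= !(distrC w.1) !(distrC w.2).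
  by rewrite /Phi /= hs hp -surjective_pairing.
split; first by move=> z _; exact: Phi_diff.
split; first by move=> z Oz; exists z.
move=> K KO Kc.
have -> : Omega `&` Phi R @^-1` K = Phi R @^-1` K.
  apply/funext => z; apply/propext; split; first by case.
  move=> Kz; split => //; have [w Ow hw] := KO _ Kz.
  exact: (Om_inv _ _ _ _ hOm (esym hw) Ow).
apply: (subclosed_compact _ (compact_setX (Sq_compact R) (Sq_compact R))).
  apply: preimage_closed; first by move=> z _; exact: Phic.
  exact: (compact_closed (@norm_hausdorff _ _) Kc).
move=> z Kz; apply: (Om_Sq _ _ hOm); have [w Ow hw] := KO _ Kz.
exact: (Om_inv _ _ _ _ hOm (esym hw) Ow).
Qed.
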